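(* Let $G$ be a topological group whose torsion part $\mathrm{tor}(G)$ is dense in $G$ and totally disconnected. Then a $G$-regular space $X$ is totally disconnected if and only if $\mathrm{tor}(C_p(X,G))$ is dense in $C_p(X,G)$.
   Context: All spaces are Tychonoff and non-empty; topological groups are Hausdorff; $e$ is the identity. For a group $K$, $\mathrm{tor}(K)=\{g\in K: g^n=e\text{ for some } n\ge1\}$. $C_p(X,G)$ is the group of continuous maps $X\to G$ with pointwise operations and the topology of pointwise convergence. $X$ is $G$-regular if for every closed $F\subseteq X$ and every $x\in X\setminus F$ there exist $f\in C_p(X,G)$ and $g\in G\setminus\{e\}$ with $f(x)=g$ and $f(F)\subseteq\{e\}$. A space is totally disconnected if for every two distinct points $x,y$ there is a clopen set containing $x$ but not $y$. *)

(* Defs.v *)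
From HB Require Import structures.
From mathcomp Require Import all_boot all_order all_algebra.
From mathcomp Require Import all_classical all_reals all_analysis.
Set Implicit Arguments. Unset Strict Implicit. Unset Printing Implicit Defensive.
Local Open Scope classical_set_scope.

Definition is_topological_group (G : topologicalType)
  (mul : G -> G -> G) (inv : G -> G) (e : G) : Prop :=
  [/\ (forall x y z, mul x (mul y z) = mul (mul x y) z),
      (forall x, mul e x = x /\ mul x e = x),
      (forall x, mul (inv x) x = e /\ mul x (inv x) = e),
      continuous (fun p : G * G => mul p.1 p.2) &
      continuous inv /\ hausdorff_space G].

Fixpoint gpow {G : Type} (mul : G -> G -> G) (e : G) (g : G) (n : nat) : G :=
  match n with
  | O => e
  | S m => mul g (gpow mul e g m)
  end.

Definition tor {G : Type} (mul : G -> G -> G) (e : G) : set G :=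
  [set g | exists n : nat, (1 <= n)%N /\ gpow mul e g n = e].

Definition tychonoff_space (X : topologicalType) : Prop :=
  completely_regular_space X /\ hausdorff_space X.

(* Totally disconnected in the paper's sense, for a subspace A of T:
   any two distinct points of A are separated by a set clopen in A
   (i.e. of the form U ∩ A = V ∩ A with U open and V closed in T). *)
Definition totally_disconnected_sub {T : topologicalType} (A : set T) : Prop :=
  forall x y : T, A x -> A y -> x <> y ->
    exists U V : set T,
      [/\ open U, closed V, U `&` A = V `&` A, U x & ~ U y].

Definition G_regular (X G : topologicalType) (e : G) : Prop :=
  forall (F : set X) (x : X), closed F -> ~ F x ->
    exists (f : X -> G) (g : G),
      [/\ continuous f, g <> e, f x = g & f @` F `<=` [set e]].

(* C_p(X,G): the continuous maps X -> G, as a subset of the space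
   {ptws X -> G} of all maps with the topology of pointwise convergence. *)
Definition Cp (X G : topologicalType) : set {ptws X -> G} :=
  [set f | continuous (f : X -> G)].

Definition pmul {X G : Type} (mul : G -> G -> G) (f h : X -> G) : X -> G :=
  fun x => mul (f x) (h x).
Definition pone {X G : Type} (e : G) : X -> G := fun _ => e.

(* S is dense in the subspace A of T (subspace topology), unfolded:
   every open set of T meeting A meets S ∩ A. *)
Definition dense_in {T : topologicalType} (S A : set T) : Prop :=
  forall W : set T, open W -> W `&` A !=set0 -> W `&` (S `&` A) !=set0.

(* Main.v *)
Require Import Defs.
From HB Require Import structures.
From mathcomp Require Import all_boot all_order all_algebra.
From mathcomp Require Import all_classical all_reals all_analysis.
Local Open Scope classical_set_scope.
Set Implicit Arguments. Unset Strict Implicit.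

Section Aux.
Variables (G : topologicalType) (mul : G -> G -> G) (e : G).
Hypothesis massoc : forall x y z, mul x (mul y z) = mul (mul x y) z.
Hypothesis mid : forall x, mul e x = x /\ mul x e = x.

Lemma gpow_add g m n : gpow mul e g (m + n) = mul (gpow mul e g m) (gpow mul e g n).
Proof.
elim: m => [|m IH] /=; first by rewrite (proj1 (mid _)).
by rewrite IH massoc.
Qed.

Lemma gpow_mulk g n k : gpow mul e g n = e -> gpow mul e g (n * k) = e.
Proof.
move=> Hn; elim: k => [|k IH]; first by rewrite muln0.
by rewrite mulnS gpow_add Hn IH (proj1 (mid _)).
Qed.

Lemma gpow_pt (X : Type) (h : X -> G) n x :
  gpow (@pmul X G mul) (@pone X G e) h n x = gpow mul e (h x) n.
Proof. by elim: n => [|n IH] //=; rewrite /pmul IH. Qed.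

End Aux.

Lemma paste_cont (X G : topologicalType) (C : set X) (h : X -> G) t :
  clopen C -> continuous h ->
  continuous (fun x => match pselect (C x) with left _ => t | right _ => h x end).
Proof.
move=> [oC cC] hc z W /=.
case: (pselect (C z)) => Cz HW.
  apply: (@filterS _ _ _ C); last by apply: open_nbhs_nbhs.
  by move=> w Cw /=; case: pselect => // _; exact: nbhs_singleton HW.
have nC : nbhs z (~` C) by apply: open_nbhs_nbhs; split => //; rewrite openC.
have hW : nbhs z (h @^-1` W) by exact: hc z W HW.
apply: filterS (filterI nC hW).
by move=> w [nCw hw] /=; case: pselect.
Qed.

Section Constr.
Variables (X G : topologicalType) (f : X -> G).

Fixpoint sat (s : seq (X * set G)) (g : X -> G) : Prop :=
  if s is p :: s' then p.2 (g p.1) /\ sat s' g else True.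
Fixpoint nbs (s : seq (X * set G)) : Prop :=
  if s is p :: s' then nbhs (f p.1) p.2 /\ nbs s' else True.
Fixpoint atpt (s : seq (X * set G)) (x0 : X) : set G :=
  if s is p :: s' then [set z | p.1 = x0 -> p.2 z] `&` atpt s' x0 else setT.
Fixpoint excl (s : seq (X * set G)) (x0 : X) (C : set X) : Prop :=
  if s is p :: s' then (p.1 <> x0 -> ~ C p.1) /\ excl s' x0 C else True.

Lemma sat_cat s1 s2 g : sat (s1 ++ s2) g <-> sat s1 g /\ sat s2 g.
Proof. elim: s1 => [|p s IH] /=; [tauto | rewrite IH; tauto]. Qed.

Lemma nbs_cat s1 s2 : nbs (s1 ++ s2) <-> nbs s1 /\ nbs s2.
Proof. elim: s1 => [|p s IH] /=; [tauto | rewrite IH; tauto]. Qed.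

Lemma nbs_atpt s x0 : nbs s -> nbhs (f x0) (atpt s x0).
Proof.
elim: s => [|p s IH] /=; first by move=> _; exact: filterT.
move=> [Hp Hs]; apply: filterI; last exact: IH.
case: (pselect (p.1 = x0)) => [E|NE].
  by subst x0; apply: filterS Hp => z pz _.
by apply: filterS (filterT : nbhs (f x0) setT) => z _ E.
Qed.

Lemma excl_exists s x0 : zero_dimensional X ->
  exists C, [/\ clopen C, C x0 & excl s x0 C].
Proof.
move=> zd; elim: s => [|p s [C [cC Cx Ce]]] /=.
  by exists setT; split => //; exact: clopenT.
case: (pselect (p.1 = x0)) => [E|NE].
  by exists C; split.
have : x0 != p.1 by apply/eqP => E; apply: NE.
move/zd => [U [cU Ux nUp]].
exists (C `&` U); split => //; first exact: clopenI.
split; first by move=> _ [].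
elim: s Ce {cC Cx} => [|q s IH] //= [H1 H2]; split; last exact: IH.
by move=> /H1 H [].
Qed.

Lemma sat_paste s x0 C t h : excl s x0 C -> C x0 -> atpt s x0 t -> sat s h ->
  sat s (fun x => match pselect (C x) with left _ => t | right _ => h x end).
Proof.
elim: s => [|p s IH] //= [Hx Hs] Cx [At As] [Sp Ss]; split; last exact: IH.
case: pselect => // Cp.
apply: At; apply: contrapT => NE; exact: (Hx NE Cp).
Qed.

End Constr.

Lemma construct (X G : topologicalType) (mul : G -> G -> G) (e : G)
  (massoc : forall x y z, mul x (mul y z) = mul (mul x y) z)
  (mid : forall x, mul e x = x /\ mul x e = x)
  (Hdense : dense (tor mul e)) (zd : zero_dimensional X) (f : X -> G) :
  forall s, nbs f s -> exists h : X -> G,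
    [/\ continuous h, (exists N, (1 <= N)%N /\ forall x, gpow mul e (h x) N = e)
      & sat s h].
Proof.
elim => [|[x0 N0] s IH] /=.
  move=> _; exists (fun _ => e); split => //; first exact: cst_continuous.
  by exists 1%N; split => // x /=; rewrite (proj1 (mid _)).
move=> [HN0 Hs]; have [h [hc [N [N1 hN]] hs]] := IH Hs.
have HA : nbhs (f x0) (N0 `&` atpt s x0) by apply: filterI =>//; exact: nbs_atpt.
have [t [At [n [n1 tn]]]] : (N0 `&` atpt s x0)^° `&` tor mul e !=set0.
  apply: Hdense; last exact: open_interior.
  by exists (f x0); exact: HA.
move=> /=.
have {}At := interior_subset At.
have [C [cC Cx Ce]] := excl_exists s x0 zd.
exists (fun x => match pselect (C x) with left _ => t | right _ => h x end).
split.
- exact: paste_cont.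
- exists (N * n)%N; split; first by rewrite muln_gt0 N1 n1.
  move=> x; case: pselect => _.
    by rewrite mulnC; apply: gpow_mulk.
  by apply: gpow_mulk.
- split; first by case: pselect => // _; case: At.
  apply: (sat_paste Ce Cx _ hs). by case: At.
Qed.

Lemma ptws_F (X G : topologicalType) (f : X -> G) (W : set {ptws X -> G}) :
  nbhs (f : {ptws X -> G}) W -> exists s, nbs f s /\ (fun g => sat s g) `<=` W.
Proof.
pose F := fun A : set {ptws X -> G} => exists s, nbs f s /\ (fun g => sat s g) `<=` A.
have FF : Filter F.
  constructor.
  - by exists [::].
  - move=> A B [s1 [n1 S1]] [s2 [n2 S2]]; exists (s1 ++ s2).
    split; first by apply/(nbs_cat f).
    move=> g Hg; have [g1 g2] := proj1 (sat_cat f s1 s2 g) Hg; exact: (conj (S1 _ g1) (S2 _ g2)).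
  - by move=> A B AB [s [n S]]; exists s; split => // g /S /AB.
move=> HW.
have := proj2 (@cvg_sup (X -> G) X (fun i => Topological.class (initial_topology (fun g : X -> G => g i))) F f FF).
apply; last exact: HW.
move=> i A; rewrite nbhsE => -[B [[B' oB' EB] Bf] BA].
subst B.
exists [:: (i, B')]; split => /=.
  by split => //; apply: open_nbhs_nbhs.
by move=> g [gB _]; apply: BA.
Qed.

Unset Implicit Arguments. Set Strict Implicit.

Theorem theorem8p1 (G : topologicalType) (mul : G -> G -> G) (inv : G -> G)
  (e : G) (HG : is_topological_group mul inv e)
  (Hdense : dense (tor mul e))
  (Htd : totally_disconnected_sub (tor mul e))
  (X : topologicalType) (HX : tychonoff_space X) (Xne : inhabited X)
  (HXG : @G_regular X G e) :
  zero_dimensional X <->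
  @dense_in {ptws X -> G} (@Cp X G `&` tor (@pmul X G mul) (@pone X G e)) (@Cp X G).
Proof.
case: HG => massoc mid minv _ [_ hG].
split.
- move=> zd W oW [f [Wf cf]].
  have [s [ns ss]] := ptws_F (open_nbhs_nbhs (conj oW Wf)).
  have [h [hc [N [N1 hN]] hs]] := construct massoc mid Hdense zd ns.
  exists h; split; first exact: ss.
  split => //; split => //.
  exists N; split => //.
  apply: functional_extensionality_dep => x.
  by rewrite (gpow_pt mul e h N x) hN.
- move=> D x y /eqP xy.
  have cly : closed [set y] by apply: accessible_closed_set1; apply: hausdorff_accessible; case: HX.
  have [f0 [g [cf0 ge f0x f0y]]] := HXG [set y] x cly (fun E => xy E).
  have f0ye : f0 y = e by apply: f0y; exists y.
  have : g != e by apply/eqP.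
  move: (hG); rewrite open_hausdorff => /[apply] -[[A B] /= [gA eB] [oA oB /eqP AB0]].
  pose W := [set h : {ptws X -> G} | A (h x)] `&` [set h : {ptws X -> G} | B (h y)].
  have oW : open W.
    apply: openI.
      exact: (proj1 (@continuousP {ptws X -> G} G (proj x)) (@proj_continuous X (fun _ => G) x) A oA).
    exact: (proj1 (@continuousP {ptws X -> G} G (proj y)) (@proj_continuous X (fun _ => G) y) B oB).
  have [h [[hA hB] [[hc [N [N1 hN]]] _]]] : W `&` (@Cp X G `&` tor (@pmul X G mul) (@pone X G e) `&` @Cp X G) !=set0.
    apply: D => //; exists f0; split => //; split => /=.
      by rewrite f0x; move: gA; rewrite inE.
    by rewrite f0ye; move: eB; rewrite inE.
  have ht : forall z, tor mul e (h z).
    move=> z; exists N; split => //.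
    by rewrite -(gpow_pt mul e h N z) hN.
  have hxy : h x <> h y.
    move=> E; have : (A `&` B) (h x) by split => //; rewrite E.
    by rewrite AB0.
  have [U [V [oU cV UV Uhx nUhy]]] := Htd _ _ (ht x) (ht y) hxy.
  exists (h @^-1` U); split => //; split.
    exact: (proj1 (continuousP h) hc U oU).
  have -> : h @^-1` U = h @^-1` V.
    apply/seteqP; split => z /= Hz.
      have H1 : (U `&` tor mul e) (h z) by split => //; apply: ht.
      by move: H1; rewrite UV; case.
    have H1 : (V `&` tor mul e) (h z) by split => //; apply: ht.
    by move: H1; rewrite -UV; case.
  apply: closed_comp => //; move=> z _; exact: hc.
Qed.
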